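(* Consider the setting in the context. Let $\mathcal F=\{i_0,\dots,i_{\bar h-1}\}\subseteq[\bar n]$ be $\bar h$ distinct racks, $p\in[\bar h]$, and let $\widetilde{\mathbf{C}}$ be any codeword. (1) Let $b\in[1,u-v]$ and $\mathcal R\subseteq[\bar n]\setminus\mathcal F$ with $|\mathcal R|=\bar d$. For every $a\in[\bar s^{\bar n}]$ and $m\in[b]$, the quantities $\sum_{g=0}^{u-1}\theta^{gm}c^{(p+x)}_{i_pu+g,a}$ for $x\in[\bar s]$, and $H_{i_p,i}(a,m)$ for $i\in\mathcal F\setminus\{i_p\}$, are determined by (are linear functions of) the values $\{H_{i_p,j}(a',m): j\in\mathcal R,\ a'\in[\bar s^{\bar n}],\ m\in[b]\}$. (2) Let $b\in[u-v+1,u]$ and $\mathcal R'\subseteq[\bar n]\setminus\mathcal F$ with $|\mathcal R'|=\bar d+1$. For every $a\in[\bar s^{\bar n}]$ and $m\in[u-v,b)$, the quantities $\sum_{g=0}^{u-1}\theta^{gm}c^{(p+x)}_{i_pu+g,a}$ for $x\in[\bar s]$, and $H_{i_p,i}(a,m)$ for $i\in\mathcal F\setminus\{i_p\}$, are determined by (are linear functions of) the values $\{H_{i_p,j}(a',m): j\in\mathcal R',\ a'\in[\bar s^{\bar n}],\ m\in[u-v,b)\}$.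
   Context: $[N]=\{0,\dots,N-1\}$. Integers: $\bar n,u\ge2$ (with $u>1$), $\bar k$, $0\le v<u$, $n=\bar nu$, $k=\bar ku+v$, $r=n-k$, $\bar r=\bar n-\bar k$ (so $r=\bar ru-v$); $\bar d,\bar h,\delta$ with $\delta\in[1,\bar h)$ and $\bar k\le\bar d\le\bar n-\bar h$; $\bar s=\bar d-\bar k+1$. $\mathbb{F}$ is a finite field with $|\mathbb{F}|\ge n\bar s+1$ containing an element $\theta$ of multiplicative order $u$; $\xi$ is a primitive element of $\mathbb{F}$ and $\lambda_{i,j}=\xi^{i\bar s+j}$ for $i\in[\bar n]$, $j\in[\bar s]$. For $a\in[\bar s^{\bar n}]$ write $a=\sum_{i}a_i\bar s^i$ with $a_i\in[\bar s]$, and let $a(i,j)$ denote the integer whose $\bar s$-ary digits equal those of $a$ except the $i$-th digit is $j$. The code $\widetilde{\mathbf{C}}$ consists of all arrays $(c^{(y)}_{iu+g,a})$ over $\mathbb{F}$, indexed by $i\in[\bar n]$, $g\in[u]$, $a\in[\bar s^{\bar n}]$, $y\in[\bar s+\bar h-\delta]$ (node $iu+g$ stores $(c^{(y)}_{iu+g,a})_{y,a}$, a vector of length $(\bar s+\bar h-\delta)\bar s^{\bar n}$), satisfying $\sum_{i=0}^{\bar n-1}\sum_{g=0}^{u-1}\theta^{gt}\lambda_{i,a_i}^t c^{(y)}_{iu+g,a}=0$ for all $t\in[r]$, $a\in[\bar s^{\bar n}]$, $y\in[\bar s+\bar h-\delta]$. For $p\in[\bar h]$, rack $j\in[\bar n]\setminus\{i_p\}$,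 $a\in[\bar s^{\bar n}]$ and integer $m$, define $H_{i_p,j}(a,m)=\sum_{x=0}^{\bar s-1}\sum_{g=0}^{u-1}\theta^{gm}c^{(p+x)}_{ju+g,\,a(i_p,\,a_{i_p}\oplus x)}$, where superscripts are taken modulo $\bar s+\bar h-\delta$ and $\oplus$ is addition modulo $\bar s$. *)

(* Defs.v *)
From HB Require Import structures.
From mathcomp Require Import all_boot all_order all_algebra all_field.
Set Implicit Arguments. Unset Strict Implicit. Unset Printing Implicit Defensive.
Import GRing.Theory.
Local Open Scope ring_scope.

Definition digit (s a i : nat) : nat := ((a %/ s ^ i) %% s)%N.

(* a(i,j): a with its i-th base-s digit replaced by j (j < s) *)
Definition setdigit (s a i j : nat) : nat :=
  (a - digit s a i * s ^ i + j * s ^ i)%N.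

(* An array c^{(y)}_{node,a} is modelled as c y node a (only in-range
   indices matter). Parameters: nb = \bar n, u, kb = \bar k, v, db = \bar d,
   hb = \bar h, dl = \delta. *)
Definition sbar (kb db : nat) : nat := (db - kb + 1)%N.
Definition nsub (sb hb dl : nat) : nat := (sb + hb - dl)%N.

Definition is_codeword (F : fieldType) (nb u kb v db hb dl : nat)
    (theta xi : F) (c : nat -> nat -> nat -> F) : Prop :=
  let sb := sbar kb db in
  let r := (nb * u - (kb * u + v))%N in
  forall t a y, (t < r)%N -> (a < sb ^ nb)%N -> (y < nsub sb hb dl)%N ->
    \sum_(i < nb) \sum_(g < u)
       theta ^+ (g * t) * (xi ^+ (i * sb + digit sb a i)) ^+ t
         * c y (i * u + g)%N a = 0.

Definition Hval (F : fieldType) (sb Y u : nat) (theta : F)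
    (c : nat -> nat -> nat -> F) (p ip j a m : nat) : F :=
  \sum_(x < sb) \sum_(g < u)
     theta ^+ (g * m) *
       c ((p + x) %% Y)%N (j * u + g)%N
         (setdigit sb a ip ((digit sb a ip + x) %% sb)).

Definition Qval (F : fieldType) (Y u : nat) (theta : F)
    (c : nat -> nat -> nat -> F) (p ip x a m : nat) : F :=
  \sum_(g < u) theta ^+ (g * m) * c ((p + x) %% Y)%N (ip * u + g)%N a.

(* Main.v *)
Require Import Defs.
From HB Require Import structures.
From mathcomp Require Import all_boot all_order all_algebra all_field.
From mathcomp Require Import zify ring.
Import GRing.Theory.

Lemma digit_form (s Q j B i i' : nat) : (0 < s)%N -> (j < s)%N -> (B < s ^ i)%N ->
  digit s ((Q * s + j) * s ^ i + B) i' =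
  if i' == i then j else if (i' < i)%N then digit s B i' else digit s Q (i' - i - 1).
Proof.
move=> s0 js Bs; rewrite /digit.
have sP k : (0 < s ^ k)%N by rewrite expn_gt0 s0.
case: ifP => [/eqP -> | ne].
  by rewrite divnMDl // divn_small // addn0 modnMDl modn_small.
case: ifP => lt.
  have -> : i = (i' + (i - i' - 1).+1)%N by lia.
  rewrite expnD mulnA mulnC mulnA divnMDl // expnS.
  by rewrite -mulnA [(s * _)%N]mulnC modnMDl.
have -> : i' = (i + (i' - i - 1).+1)%N by move/negbT: ne; move/negbT: lt; lia.
rewrite expnD divnMA divnMDl // (divn_small Bs).
rewrite (_ : (Q * s + j + 0 = Q * s + j)%N); last by lia.
rewrite expnS divnMA divnMDl // (divn_small js) addn0.
by have -> : (i + (i' - i - 1).+1 - i - 1 = i' - i - 1)%N by lia.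
Qed.

Lemma digit_rep (s a i : nat) : (0 < s)%N ->
  a = ((a %/ s ^ i %/ s) * s + digit s a i) * s ^ i + a %% s ^ i.
Proof. by move=> s0; rewrite /digit -divn_eq -divn_eq. Qed.

Lemma setdigit_form (s a i j : nat) : (0 < s)%N ->
  setdigit s a i j = ((a %/ s ^ i %/ s) * s + j) * s ^ i + a %% s ^ i.
Proof.
move=> s0; rewrite /setdigit {1}(digit_rep s a i s0).
set Q := (a %/ s ^ i %/ s)%N; set d := digit s a i; set P := (s ^ i)%N; set B := (a %% P)%N.
rewrite !mulnDl; lia.
Qed.

Lemma digit_setdigit_same (s a i j : nat) : (0 < s)%N -> (j < s)%N ->
  digit s (setdigit s a i j) i = j.
Proof.
move=> s0 js; rewrite setdigit_form // digit_form ?eqxx //.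
by rewrite ltn_mod expn_gt0 s0.
Qed.

Lemma digit_setdigit_other (s a i j i' : nat) : (0 < s)%N -> (j < s)%N -> i' != i ->
  digit s (setdigit s a i j) i' = digit s a i'.
Proof.
move=> s0 js ne; have Bs : (a %% s ^ i < s ^ i)%N by rewrite ltn_mod expn_gt0 s0.
rewrite setdigit_form // digit_form // {3}(digit_rep s a i s0) digit_form //.
  by rewrite (negbTE ne).
by rewrite /digit ltn_mod.
Qed.

Lemma setdigitK (s a i j k : nat) : (0 < s)%N -> (j < s)%N ->
  setdigit s (setdigit s a i j) i k = setdigit s a i k.
Proof.
move=> s0 js; have Bs : (a %% s ^ i < s ^ i)%N by rewrite ltn_mod expn_gt0 s0.
have sP : (0 < s ^ i)%N by rewrite expn_gt0 s0.
rewrite [LHS]setdigit_form // [setdigit s a i j]setdigit_form //.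
rewrite divnMDl // (divn_small Bs) addn0 divnMDl // (divn_small js) addn0.
by rewrite modnMDl (modn_small Bs) setdigit_form.
Qed.

Lemma setdigit_id (s a i : nat) : (0 < s)%N -> setdigit s a i (digit s a i) = a.
Proof. by move=> s0; rewrite setdigit_form // -digit_rep. Qed.

Lemma setdigit_lt (s a i j n : nat) : (0 < s)%N -> (j < s)%N -> (i < n)%N ->
  (a < s ^ n)%N -> (setdigit s a i j < s ^ n)%N.
Proof.
move=> s0 js ilt an; have Bs : (a %% s ^ i < s ^ i)%N by rewrite ltn_mod expn_gt0 s0.
rewrite setdigit_form //.
set Q := (a %/ s ^ i %/ s)%N; set P := (s ^ i)%N; set B := (a %% P)%N.
have hQ : (Q < s ^ (n - i.+1))%N.
  rewrite /Q -divnMA -expnSr ltn_divLR ?expn_gt0 ?s0 // -expnD.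
  by have -> : (n - i.+1 + i.+1 = n) by lia.
have h1 : ((Q * s + j) * P + B < (Q.+1 * s) * P)%N.
  have : (Q * s + j < Q.+1 * s)%N by rewrite mulSn; lia.
  move=> h; apply: (@leq_trans ((Q * s + j).+1 * P)).
    by rewrite mulSn; lia.
  by rewrite leq_mul2r h orbT.
apply: (leq_trans h1).
have -> : (s ^ n = s ^ (n - i.+1) * s * P)%N by rewrite /P -expnSr -expnD; congr (_ ^ _); lia.
by rewrite leq_mul2r leq_mul2r hQ !orbT.
Qed.

Local Open Scope ring_scope.

Lemma lagrange (F : fieldType) (I : eqType) (K : seq I) (mu : I -> F) (L : nat) (k0 : I) :
  k0 \in K -> uniq K -> (size K <= L)%N -> {in K &, injective mu} ->
  exists beta : nat -> F, forall z : I -> F,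
    z k0 = \sum_(l < L) beta l * \sum_(k <- K) mu k ^+ l * z k.
Proof.
move=> k0K uK sK inj.
set K' := filter (predC1 k0) K.
pose P := \prod_(a <- map mu K') ('X - a%:P).
have sP : (size P <= L)%N.
  rewrite /P size_prod_XsubC size_map /K' size_filter.
  have h1 := count_predC (predC1 k0) K.
  have h2 : (0 < count (predC (predC1 k0)) K)%N.
    by rewrite -has_count; apply/hasP; exists k0 => //=; rewrite eqxx.
  lia.
have Pk k : k \in K -> k != k0 -> P.[mu k] = 0.
  move=> kK kn; apply/eqP; rewrite -/(root P (mu k)) root_prod_XsubC.
  by apply/mapP; exists k => //; rewrite mem_filter /= kn.
have Pk0 : P.[mu k0] != 0.
  rewrite -/(root P (mu k0)) root_prod_XsubC; apply/mapP => -[k].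
  rewrite mem_filter /= => /andP[kn kK] e.
  by move: kn; rewrite (inj _ _ k0K kK e) eqxx.
exists (fun l => P`_l / P.[mu k0]) => z.
rewrite (eq_bigr (fun l : 'I_L => \sum_(k <- K) P`_l / P.[mu k0] * (mu k ^+ l * z k)));
  last by move=> l _; rewrite [in LHS]mulr_sumr.
rewrite exchange_big /=.
rewrite (eq_bigr (fun k => z k * P.[mu k] / P.[mu k0])); last first.
  move=> k _; rewrite (horner_coef_wide (mu k) sP) [in RHS]mulr_sumr [in RHS]mulr_suml.
  by apply: eq_bigr => l _; ring.
rewrite (bigD1_seq k0) //= big1_seq ?addr0 ?mulfK //.
by move=> k /andP[kn kK]; rewrite Pk // mulr0 mul0r.
Qed.

Lemma theta_red (F : fieldType) (u : nat) (theta : F) g m l :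
  theta ^+ u = 1 -> theta ^+ (g * (m + u * l)) = theta ^+ (g * m).
Proof.
move=> tu; rewrite mulnDr exprD mulnCA [theta ^+ (u * _)]exprM tu expr1n mulr1 //.
Qed.

Lemma core (F : fieldType) (nb u sb Y r : nat) (theta xi : F)
    (c : nat -> nat -> nat -> F) (p : nat) (i0 : 'I_nb) (a m l : nat) :
  (0 < sb)%N -> (0 < Y)%N -> (a < sb ^ nb)%N -> theta ^+ u = 1 ->
  (forall t a y, (t < r)%N -> (a < sb ^ nb)%N -> (y < Y)%N ->
    \sum_(i < nb) \sum_(g < u)
       theta ^+ (g * t) * (xi ^+ (i * sb + digit sb a i)) ^+ t
         * c y (i * u + g)%N a = 0) ->
  (m + u * l < r)%N ->
  \sum_(i < nb | i != i0) (xi ^+ (i * sb + digit sb a i)) ^+ (m + u * l)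
      * Hval sb Y u theta c p i0 i a m
  + \sum_(x < sb) (xi ^+ (i0 * sb + (digit sb a i0 + x) %% sb)) ^+ (m + u * l)
      * Qval Y u theta c p i0 x (setdigit sb a i0 ((digit sb a i0 + x) %% sb)) m = 0.
Proof.
move=> s0 Y0 aS tu cw tr.
set t := (m + u * l)%N.
set a' := fun x : nat => setdigit sb a i0 ((digit sb a i0 + x) %% sb).
have dlt x : ((digit sb a i0 + x) %% sb < sb)%N by rewrite ltn_pmod.
have a'S x : (a' x < sb ^ nb)%N by rewrite /a' setdigit_lt.
have E : \sum_(x < sb) \sum_(i < nb) \sum_(g < u)
       theta ^+ (g * t) * (xi ^+ (i * sb + digit sb (a' x) i)) ^+ t
         * c ((p + x) %% Y)%N (i * u + g)%N (a' x) = 0.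
  by apply: big1 => x _; apply: cw => //; rewrite ltn_pmod.
rewrite -[RHS]E exchange_big [RHS](bigD1 i0) //= [LHS]addrC; congr (_ + _).
  apply: eq_bigr => x _; rewrite /Qval [in LHS]mulr_sumr; apply: eq_bigr => g _.
  rewrite /a' digit_setdigit_same // theta_red //.
  by rewrite mulrCA mulrA.
apply: eq_bigr => i ine; rewrite /Hval [in LHS]mulr_sumr; apply: eq_bigr => x _.
rewrite [in LHS]mulr_sumr; apply: eq_bigr => g _.
rewrite /a' digit_setdigit_other // theta_red //.
by rewrite mulrCA mulrA.
Qed.

Lemma size_index_ord n : size (index_enum 'I_n) = n.
Proof.
rewrite -(filter_predT (index_enum _)) deprecated_filter_index_enum -cardE.
exact: card_ord.
Qed.

Lemma lamE (F : fieldType) (X v : F) m u l :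
  (X ^+ u) ^+ l * (X ^+ m * v) = X ^+ (m + u * l) * v.
Proof. by rewrite exprD exprM mulrA [(X ^+ u) ^+ l * _]mulrC. Qed.

Lemma card_unk n (R : {set 'I_n}) (i0 : 'I_n) : i0 \notin R ->
  size [seq i <- index_enum 'I_n | (i \notin R) && (i != i0)] = (n - #|R| - 1)%N.
Proof.
move=> h; rewrite deprecated_filter_index_enum -cardE.
have -> : #|[pred i : 'I_n | (i \notin R) && (i != i0)]| = #|(~: R) :\ i0|.
  by apply: eq_card => i; rewrite !inE andbC.
have := cardsD1 i0 (~: R); rewrite !inE h /= => e.
have c2 : (#|R| + #|~: R| = n)%N := etrans (cardsC R) (card_ord n).
move: e c2; set X := #|~: R|; set Z := #|~: R :\ i0|; set W := #|R|; clearbody X Z W. clear. move=> e c2. lia.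

Qed.

Lemma solve (F : fieldType) (nb u sb Y r N L : nat) (theta xi : F) (p : nat)
    (i0 : 'I_nb) (R : {set 'I_nb}) (a m : nat) :
  (0 < sb)%N -> (0 < Y)%N -> (0 < u)%N -> (a < sb ^ nb)%N -> theta ^+ u = 1 ->
  N.-primitive_root xi -> (nb * sb * u <= N)%N ->
  i0 \notin R -> (nb + sb <= #|R| + L + 1)%N ->
  (forall l, (l < L)%N -> (m + u * l < r)%N) ->
  let cw := fun c : nat -> nat -> nat -> F =>
    forall t a y, (t < r)%N -> (a < sb ^ nb)%N -> (y < Y)%N ->
    \sum_(i < nb) \sum_(g < u)
       theta ^+ (g * t) * (xi ^+ (i * sb + digit sb a i)) ^+ t
         * c y (i * u + g)%N a = 0 in
  (forall i : 'I_nb, i \notin R -> i != i0 ->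
     exists kap : 'I_nb -> F, forall c, cw c ->
       Hval sb Y u theta c p i0 i a m =
       \sum_(j in R) kap j * Hval sb Y u theta c p i0 j a m)
  /\
  (forall x, (x < sb)%N ->
     exists kap : 'I_nb -> F, forall c, cw c ->
       Qval Y u theta c p i0 x (setdigit sb a i0 ((digit sb a i0 + x) %% sb)) m =
       \sum_(j in R) kap j * Hval sb Y u theta c p i0 j a m).
Proof.
move=> s0 Y0 u0 aS tu pr NN i0R card hr cw.
set d := digit sb a i0.
pose pt (k : 'I_nb + 'I_sb) : nat := match k with
  | inl i => (i * sb + digit sb a i)%N
  | inr x => (i0 * sb + (d + x) %% sb)%N end.
pose mu k := (xi ^+ pt k) ^+ u.
pose w k := (xi ^+ pt k) ^+ m.
pose val c (k : 'I_nb + 'I_sb) := match k with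
  | inl i => Hval sb Y u theta c p i0 i a m
  | inr x => Qval Y u theta c p i0 x (setdigit sb a i0 ((d + x) %% sb)) m end.
pose K := [seq (inl i : 'I_nb + 'I_sb) | i <- [seq i <- index_enum 'I_nb | (i \notin R) && (i != i0)]]
          ++ [seq (inr x : 'I_nb + 'I_sb) | x <- index_enum 'I_sb].
have N0 : (0 < N)%N.
  have nb0 : (0 < nb)%N := leq_ltn_trans (leq0n _) (ltn_ord i0).
  by apply: leq_trans NN; rewrite !muln_gt0 s0 u0 nb0.
have xi0 : xi != 0.
  apply/eqP => x0; have := prim_expr_order pr; rewrite x0 expr0n.
  by case: (N) N0 => // n _ /eqP; rewrite eq_sym oner_eq0.
have w0 k : w k != 0 by rewrite expf_neq0 // expf_neq0.
have ptlt k : (pt k < nb * sb)%N.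
  have h (i : 'I_nb) e : (e < sb)%N -> (i * sb + e < nb * sb)%N.
    move=> es; apply: (@leq_trans (i.+1 * sb)); first by rewrite mulSn; lia.
    by rewrite leq_mul2r ltn_ord orbT.
  by case: k => [i|x] /=; apply: h; rewrite /digit ltn_pmod.
have uK : uniq K.
  rewrite cat_uniq !map_inj_uniq ?filter_uniq ?index_enum_uniq //; last 2 first.
    by move=> x y [].
    by move=> x y [].
  rewrite andbT /=; apply/hasP => -[k /mapP [x _ ->] /mapP [y _]] //.
have sK : (size K <= L)%N.
  rewrite size_cat !size_map card_unk // size_index_ord.
  have c1 : (0 < #|~: R|)%N by apply/card_gt0P; exists i0; rewrite inE.
  have c2 : (#|R| + #|~: R| = nb)%N := etrans (cardsC R) (card_ord nb).
  move: c1 c2 card; set X := #|~: R|; set W := #|R|; clearbody X W.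
  clear; lia.
have inj : {in K &, injective mu}.
  move=> k1 k2 k1K k2K /eqP; rewrite /mu -!exprM (eq_prim_root_expr pr).
  rewrite !modn_small; first last.
  - by apply: leq_trans NN; rewrite ltn_mul2r u0 ptlt.
  - by apply: leq_trans NN; rewrite ltn_mul2r u0 ptlt.
  rewrite eqn_pmul2r // => /eqP e.
  have dv k : (pt k %/ sb = match k with inl i => nat_of_ord i | inr _ => nat_of_ord i0 end)%N.
    by case: k => [i|x] /=; rewrite divnMDl // divn_small ?addn0 // /digit ltn_pmod.
  have md k : (pt k %% sb = match k with inl i => digit sb a i | inr x => (d + x) %% sb end)%N.
    by case: k => [i|x] /=; rewrite modnMDl modn_small // /digit ltn_pmod.
  have e1 := dv k1; have e2 := dv k2; have m1 := md k1; have m2 := md k2.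
  rewrite e in e1 m1.
  move: k1K k2K e1 m1 e2 m2; clear e.
  rewrite !mem_cat.
  case: k1 => [i1|x1]; case: k2 => [i2|x2] /= k1K k2K e1 m1 e2 m2.
  - by congr inl; apply: val_inj; rewrite /= -e1 e2.
  - move: k1K => /orP[/mapP[z zin [ez]]|/mapP[//]]; move: zin; rewrite -ez mem_filter => /andP[/andP[_ /eqP]].
    by move=> ne; exfalso; apply: ne; apply: val_inj; rewrite /= -e1 e2.
  - move: k2K => /orP[/mapP[z zin [ez]]|/mapP[//]]; move: zin; rewrite -ez mem_filter => /andP[/andP[_ /eqP]].
    by move=> ne; exfalso; apply: ne; apply: val_inj; rewrite /= -e2 e1.
  - congr inr; apply: val_inj => /=.
    have : (d + x1 == d + x2 %[mod sb])%N by rewrite -m1 m2.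
    by rewrite eqn_modDl !modn_small // => /eqP.
have key c : cw c -> forall l, (l < L)%N ->
    \sum_(k <- K) mu k ^+ l * (w k * val c k) =
    - \sum_(j in R) (xi ^+ (j * sb + digit sb a j)) ^+ (m + u * l)
                    * Hval sb Y u theta c p i0 j a m.
  move=> hc l hl.
  have E := @core F nb u sb Y r theta xi c p i0 a m l s0 Y0 aS tu hc (hr l hl).
  rewrite (bigID (fun i : 'I_nb => i \in R)) /= in E.
  rewrite (eq_bigl (fun i : 'I_nb => i \in R)) in E; last first.
    by move=> i /=; case: (boolP (i \in R)) => iR; rewrite ?andbF ?andbT //; apply/negP => /eqP ii; move: i0R; rewrite -ii iR.
  rewrite big_cat /= !big_map big_filter.
  apply/eqP; rewrite -subr_eq0 opprK; apply/eqP; rewrite -[RHS]E.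
  rewrite (eq_bigr (fun i : 'I_nb => (xi ^+ (i * sb + digit sb a i)) ^+ (m + u * l)
                    * Hval sb Y u theta c p i0 i a m)); last by move=> i _; rewrite lamE.
  rewrite [X in _ + X + _](eq_bigr (fun x : 'I_sb => (xi ^+ (i0 * sb + (d + x) %% sb)) ^+ (m + u * l)
      * Qval Y u theta c p i0 x (setdigit sb a i0 ((d + x) %% sb)) m)); last by move=> x _; rewrite lamE.
  set f := fun i : 'I_nb => xi ^+ (i * sb + digit sb a i) ^+ (m + u * l) * Hval sb Y u theta c p i0 i a m.
  have eb : \sum_(i < nb | (i != i0) && (i \notin R)) f i = \sum_(i < nb | (i \notin R) && (i != i0)) f i.
    by apply: eq_bigl => i; rewrite andbC.
  rewrite eb /d; ring.
have gen k0 : k0 \in K -> exists kap : 'I_nb -> F, forall c, cw c ->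
    val c k0 = \sum_(j in R) kap j * Hval sb Y u theta c p i0 j a m.
  move=> k0K; have [be hbe] := @lagrange F _ K mu L k0 k0K uK sK inj.
  exists (fun j => - (\sum_(l < L) be l * (xi ^+ (j * sb + digit sb a j)) ^+ (m + u * l)) / w k0).
  move=> c hc; have := hbe (fun k => w k * val c k) => /= e.
  apply: (mulfI (w0 k0)); rewrite e.
  rewrite (eq_bigr (fun l : 'I_L => - \sum_(j in R) be l * ((xi ^+ (j * sb + digit sb a j)) ^+ (m + u * l)
                    * Hval sb Y u theta c p i0 j a m))); last first.
    by move=> l _; rewrite key // mulrN mulr_sumr.
  rewrite sumrN exchange_big [in RHS]mulr_sumr -sumrN; apply: eq_bigr => j _.
  have wk := w0 k0.
  transitivity (- (\sum_(l < L) be l * (xi ^+ (j * sb + digit sb a j)) ^+ (m + u * l))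
                 * Hval sb Y u theta c p i0 j a m).
    by rewrite mulNr [in RHS]mulr_suml; congr (- _); apply: eq_bigr => l _; rewrite mulrA.
  by field.
split.
  move=> i iR ii0; apply: (gen (inl i)).
  by rewrite mem_cat; apply/orP; left; apply/mapP; exists i => //; rewrite mem_filter iR ii0 mem_index_enum.
move=> x xs; have [|kap h] := gen (inr (Ordinal xs)).
  by rewrite mem_cat; apply/orP; right; apply/mapP; exists (Ordinal xs) => //; rewrite mem_index_enum.
by exists kap => c hc; exact: (h c hc).
Qed.

Lemma collapse (F : fieldType) nb (R : {set 'I_nb}) (lo hi a0 m N : nat)
    (kap : 'I_nb -> F) (H : 'I_nb -> nat -> nat -> F) :
  (a0 < N)%N -> (lo <= m < hi)%N ->
  \sum_(j in R) \sum_(0 <= a' < N) \sum_(lo <= m' < hi)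
     (if (a' == a0) && (m' == m) then kap j else 0) * H j a' m'
  = \sum_(j in R) kap j * H j a0 m.
Proof.
move=> aN hm; apply: eq_bigr => j _.
rewrite (eq_bigr (fun a' => if a' == a0 then kap j * H j a0 m else 0)).
  by rewrite -big_mkcond big_nat1_eq /= aN.
move=> a' _; case: eqP => [->|_] /=.
  rewrite (eq_bigr (fun m' => if m' == m then kap j * H j a0 m' else 0)).
    by rewrite -big_mkcond big_nat1_eq hm.
  by move=> m' _; case: eqP => _; rewrite ?mul0r.
by apply: big1 => m' _; rewrite mul0r.
Qed.

Lemma part_gen (F : fieldType) (nb u sb Y r N L : nat) (theta xi : F) (p : nat)
    (i0 : 'I_nb) (R : {set 'I_nb}) (a m lo hi : nat) :
  (0 < sb)%N -> (0 < Y)%N -> (0 < u)%N -> (a < sb ^ nb)%N -> theta ^+ u = 1 ->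
  N.-primitive_root xi -> (nb * sb * u <= N)%N ->
  i0 \notin R -> (nb + sb <= #|R| + L + 1)%N ->
  (forall l, (l < L)%N -> (m + u * l < r)%N) -> (lo <= m < hi)%N ->
  let cw := fun c : nat -> nat -> nat -> F =>
    forall t a y, (t < r)%N -> (a < sb ^ nb)%N -> (y < Y)%N ->
    \sum_(i < nb) \sum_(g < u)
       theta ^+ (g * t) * (xi ^+ (i * sb + digit sb a i)) ^+ t
         * c y (i * u + g)%N a = 0 in
  (forall x, (x < sb)%N -> exists coef : 'I_nb -> nat -> nat -> F, forall c, cw c ->
      Qval Y u theta c p i0 x a m =
      \sum_(j in R) \sum_(0 <= a' < sb ^ nb) \sum_(lo <= m' < hi)
         coef j a' m' * Hval sb Y u theta c p i0 j a' m')
  /\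
  (forall i : 'I_nb, i \notin R -> i != i0 -> exists coef : 'I_nb -> nat -> nat -> F,
    forall c, cw c ->
      Hval sb Y u theta c p i0 i a m =
      \sum_(j in R) \sum_(0 <= a' < sb ^ nb) \sum_(lo <= m' < hi)
         coef j a' m' * Hval sb Y u theta c p i0 j a' m').
Proof.
move=> s0 Y0 u0 aS tu pr NN i0R card hr hm cw.
split.
  move=> x xs.
  set a0 := setdigit sb a i0 ((digit sb a i0 + (sb - x)) %% sb).
  have a0S : (a0 < sb ^ nb)%N by rewrite setdigit_lt // ltn_pmod.
  have [_ hQ] := @solve F nb u sb Y r N L theta xi p i0 R a0 m s0 Y0 u0 a0S tu pr NN i0R card hr.
  have [kap hk] := hQ x xs.
  exists (fun j a' m' => if (a' == a0) && (m' == m) then kap j else 0).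
  move=> c hc; rewrite collapse // -hk //.
  congr Qval.
  rewrite /a0 digit_setdigit_same ?ltn_pmod // setdigitK ?ltn_pmod //.
  rewrite modnDml -addnA subnK ?(ltnW xs) // modnDr modn_small ?setdigit_id //.
  by rewrite /digit ltn_pmod.
move=> i iR ii0.
have [hH _] := @solve F nb u sb Y r N L theta xi p i0 R a m s0 Y0 u0 aS tu pr NN i0R card hr.
have [kap hk] := hH i iR ii0.
exists (fun j a' m' => if (a' == a) && (m' == m) then kap j else 0).
by move=> c hc; rewrite collapse // -hk.
Qed.

Lemma A1 nb kb db hb : (kb <= db)%N -> (db + hb <= nb)%N ->
  (nb + (db - kb + 1) <= db + (nb - kb) + 1)%N.
Proof. lia. Qed.

Lemma A2 nb u kb v m l : (v < u)%N -> (m < u - v)%N -> (l < nb - kb)%N ->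
  (m + u * l < nb * u - (kb * u + v))%N.
Proof.
move=> vu mu ll.
have h : (u * l.+1 <= u * (nb - kb))%N by rewrite leq_mul2l ll orbT.
rewrite mulnBr mulnS in h; nia.
Qed.

Lemma A3 nb u kb v m l : (v < u)%N -> (m < u)%N -> (l < nb - kb - 1)%N ->
  (m + u * l < nb * u - (kb * u + v))%N.
Proof.
move=> vu mu ll.
have h : (u * l.+2 <= u * (nb - kb))%N by rewrite leq_mul2l orbC; apply/orP; left; lia.
rewrite mulnBr !mulnS in h; nia.
Qed.

Lemma A4 nb kb db hb : (kb <= db)%N -> (db + hb <= nb)%N -> (1 < hb)%N ->
  (nb + (db - kb + 1) <= (db + 1) + (nb - kb - 1) + 1)%N.
Proof. lia. Qed.

Theorem lemma1 (F : finFieldType) (nb u kb v db hb dl : nat) (theta xi : F)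
    (ifam : 'I_hb -> 'I_nb) (p : 'I_hb) :
  (1 < nb)%N -> (1 < u)%N -> (v < u)%N ->
  (1 <= dl)%N -> (dl < hb)%N -> (kb <= db)%N -> (db + hb <= nb)%N ->
  (nb * u * sbar kb db + 1 <= #|F|)%N ->
  u.-primitive_root theta -> (#|F|.-1).-primitive_root xi ->
  injective ifam ->
  let sb := sbar kb db in
  let Y := nsub sb hb dl in
  let ip : nat := ifam p in
  (* part (1) *)
  (forall (b : nat) (R : {set 'I_nb}),
     (1 <= b <= u - v)%N -> #|R| = db ->
     [disjoint R & [set ifam q | q : 'I_hb]] ->
     forall a m, (a < sb ^ nb)%N -> (m < b)%N ->
       (forall x, (x < sb)%N ->
          exists coef : 'I_nb -> nat -> nat -> F,
          forall c, is_codeword nb u kb v db hb dl theta xi c ->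
            Qval Y u theta c p ip x a m =
            \sum_(j in R) \sum_(0 <= a' < sb ^ nb) \sum_(0 <= m' < b)
               coef j a' m' * Hval sb Y u theta c p ip j a' m')
       /\
       (forall q : 'I_hb, q != p ->
          exists coef : 'I_nb -> nat -> nat -> F,
          forall c, is_codeword nb u kb v db hb dl theta xi c ->
            Hval sb Y u theta c p ip (ifam q) a m =
            \sum_(j in R) \sum_(0 <= a' < sb ^ nb) \sum_(0 <= m' < b)
               coef j a' m' * Hval sb Y u theta c p ip j a' m'))
  /\
  (* part (2) *)
  (forall (b : nat) (R : {set 'I_nb}),
     (u - v + 1 <= b <= u)%N -> #|R| = (db + 1)%N ->
     [disjoint R & [set ifam q | q : 'I_hb]] ->
     forall a m, (a < sb ^ nb)%N -> (u - v <= m < b)%N ->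
       (forall x, (x < sb)%N ->
          exists coef : 'I_nb -> nat -> nat -> F,
          forall c, is_codeword nb u kb v db hb dl theta xi c ->
            Qval Y u theta c p ip x a m =
            \sum_(j in R) \sum_(0 <= a' < sb ^ nb) \sum_(u - v <= m' < b)
               coef j a' m' * Hval sb Y u theta c p ip j a' m')
       /\
       (forall q : 'I_hb, q != p ->
          exists coef : 'I_nb -> nat -> nat -> F,
          forall c, is_codeword nb u kb v db hb dl theta xi c ->
            Hval sb Y u theta c p ip (ifam q) a m =
            \sum_(j in R) \sum_(0 <= a' < sb ^ nb) \sum_(u - v <= m' < b)
               coef j a' m' * Hval sb Y u theta c p ip j a' m')).
Proof.
move=> nb1 u1 vu dl1 dlh kd dhn Fc pth pxi injf sb Y ip.
have s0 : (0 < sb)%N by rewrite /sb /sbar addn1.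
have Y0 : (0 < Y)%N.
  by rewrite /Y /nsub subn_gt0; apply: (leq_trans dlh); exact: leq_addl.
have u0 : (0 < u)%N := ltnW u1.
have tu := prim_expr_order pth.
have NN : (nb * sb * u <= #|F|.-1)%N.
  have h : (nb * sb * u < #|F|)%N by rewrite mulnAC -addn1.
  by rewrite -ltnS prednK // (leq_ltn_trans _ h).
have qR (R : {set 'I_nb}) (q : 'I_hb) : [disjoint R & [set ifam q | q : 'I_hb]] -> ifam q \notin R.
  move=> dis; apply/negbT; apply: (disjointFl dis).
  by apply/imsetP; exists q.
have qne q : q != p -> ifam q != ifam p.
  by move=> ne; apply: contra ne => /eqP /injf ->.
have hb1 : (1 < hb)%N by apply: leq_ltn_trans dlh.
split.
  move=> b R /andP[b1 bu] cR dis a m aS mb.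
  have hc : (nb + sb <= #|R| + (nb - kb) + 1)%N by rewrite cR /sb /sbar; exact: A1 kd dhn.
  have hr : forall l, (l < nb - kb)%N -> (m + u * l < nb * u - (kb * u + v))%N.
    by move=> l hl; apply: A2 => //; apply: leq_trans mb bu.
  have hm : (0 <= m < b)%N by rewrite leq0n mb.
  have [hQ hH] := @part_gen F nb u sb Y (nb * u - (kb * u + v)) #|F|.-1 (nb - kb)
     theta xi p (ifam p) R a m 0 b s0 Y0 u0 aS tu pxi NN (qR R p dis) hc hr hm.
  split; first by move=> x xs; exact: hQ x xs.
  by move=> q qp; exact: hH _ (qR R q dis) (qne q qp).
move=> b R /andP[b1 bu] cR dis a m aS mb.
have hc : (nb + sb <= #|R| + (nb - kb - 1) + 1)%N by rewrite cR /sb /sbar; exact: A4 kd dhn hb1.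
have hr : forall l, (l < nb - kb - 1)%N -> (m + u * l < nb * u - (kb * u + v))%N.
  by move=> l hl; apply: A3 => //; case/andP: mb => _ mb'; apply: leq_trans mb' bu.
have [hQ hH] := @part_gen F nb u sb Y (nb * u - (kb * u + v)) #|F|.-1 (nb - kb - 1)
   theta xi p (ifam p) R a m (u - v) b s0 Y0 u0 aS tu pxi NN (qR R p dis) hc hr mb.
split; first by move=> x xs; exact: hQ x xs.
by move=> q qp; exact: hH _ (qR R q dis) (qne q qp).
Qed.
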